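(* Let $p\ge2$ be an integer and let $G$ be a graph with $\mathrm{girth}(G)\ge 2p-1$. Then $G$ is $p$-path degenerate if and only if $G$ does not contain a subgraph $H$ that is a $\le(p-2)$-subdivision of a simple graph with minimum degree at least $3$.
   Context: Graphs are finite and simple; the girth is the length of a shortest cycle ($+\infty$ for forests). A $\le k$-subdivision of a graph $F$ is a graph obtained from $F$ by replacing each edge by a path of length at most $k+1$ (i.e. subdividing each edge at most $k$ times), these paths being internally disjoint. A strict ear of a graph $G$ is a path of $G$ whose internal vertices all have degree $2$ in $G$ and whose two endpoints are distinct. For an integer $p\ge1$, a $p$-reduction of $G$ is the deletion of either an isolated vertex, or a vertex of degree $1$, or the internal vertices of a strict ear of $G$ of length at least $p$. A graph is $p$-path degenerate if it can be reduced to the empty graph by a sequence of $p$-reductions. *)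

(* Defs.v *)
From mathcomp Require Import all_boot.
Set Implicit Arguments. Unset Strict Implicit. Unset Printing Implicit Defensive.

Section Graphs.
Variables (T : finType) (e : rel T).

Definition simple_graph : Prop := irreflexive e /\ symmetric e.

(* girth(G) >= g : every cycle (>= 3 distinct vertices, cyclically adjacent)
   has length >= g.  Forests satisfy this for every g. *)
Definition girth_ge (g : nat) : Prop :=
  forall c : seq T, uniq c -> 3 <= size c -> cycle e c -> g <= size c.

Definition deg_in (V : {set T}) (x : T) : nat := #|[set y in V | e x y]|.

(* a strict ear of G[V]: path x, mid..., y of distinct vertices of V,
   x <> y, all internal vertices of degree 2 in G[V]; length = size mid + 1 *)
Definition strict_ear (V : {set T}) (x : T) (mid : seq T) (y : T) : Prop :=
  [/\ x \in V, y \in V & all (fun z => z \in V) mid] /\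
  [/\ uniq (x :: mid ++ [:: y]), path e x (mid ++ [:: y]) &
      all (fun z => deg_in V z == 2) mid].

Inductive p_reduction (p : nat) (V : {set T}) : {set T} -> Prop :=
| red_low_deg x : x \in V -> deg_in V x <= 1 -> p_reduction p V (V :\ x)
| red_ear x mid y : strict_ear V x mid y -> p <= (size mid).+1 ->
    p_reduction p V (V :\: [set z | z \in mid]).

Inductive reduces_to_empty (p : nat) : {set T} -> Prop :=
| rte_nil : reduces_to_empty p set0
| rte_step V V' : p_reduction p V V' -> reduces_to_empty p V' ->
    reduces_to_empty p V.

Definition path_degenerate (p : nat) : Prop := reduces_to_empty p [set: T].

(* G contains a subgraph which is a <= k-subdivision of a (nonempty) simple
   graph F with minimum degree >= 3.  F has vertex set B (branch vertices,
   a subset of the vertices of G) and adjacency f; each edge uv of F is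
   replaced by the G-path u, P u v, v with at most k internal vertices;
   P v u is the reverse path; internal vertices avoid B and the paths of
   distinct edges are internally disjoint. *)
Definition has_subdivision_mindeg3 (k : nat) : Prop :=
  exists (B : {set T}) (f : rel T) (P : T -> T -> seq T),
    [/\ B != set0,
        ((forall u, ~~ f u u) /\ (forall u v, f u v = f v u)),
        (forall u v, f u v -> u \in B /\ v \in B),
        (forall u, u \in B -> 3 <= #|[set v in B | f u v]|) &
        ((forall u v, f u v ->
           [/\ P v u = rev (P u v), size (P u v) <= k,
               uniq (u :: P u v ++ [:: v]), path e u (P u v ++ [:: v]) &
               all (fun z => z \notin B) (P u v)]) /\
        (forall u v u' v', f u v -> f u' v' ->
           [set u; v] != [set u'; v'] -> [disjoint P u v & P u' v']))].

End Graphs.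

(* Main.v *)
Require Import Defs.
From mathcomp Require Import all_boot.
From Stdlib Require Import Classical.
From mathcomp Require Import zify.

Set Implicit Arguments. Unset Strict Implicit. Unset Printing Implicit Defensive.

Section Aux.
Variable T : finType.

Lemma disjP (A B : {pred T}) :
  reflect (forall x, x \in A -> x \in B -> False) [disjoint A & B].
Proof.
apply: (iffP pred0P) => H.
- move=> x xA xB; have := H x; by rewrite /= xA xB.
- move=> x /=; apply/negbTE/negP => /andP[]; exact: H.
Qed.

Lemma split_mem (s : seq T) z : z \in s -> exists s1 s2, s = s1 ++ z :: s2.
Proof. by case/splitPr => s1 s2; exists s1, s2. Qed.

Lemma set2_neq (x y x' y' w : T) :
  w \in [set x; y] -> w \notin [set x'; y'] -> [set x; y] != [set x'; y'].
Proof. by move=> H1 H2; apply/eqP => E; move: H2; rewrite -E H1. Qed.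

Lemma path_rev (e : rel T) : symmetric e ->
  forall x s y, path e x (s ++ [:: y]) -> path e y (rev s ++ [:: x]).
Proof.
move=> se x s y H.
have E := rev_path e x (rcons s y).
rewrite last_rcons belast_rcons rev_cons in E.
rewrite cats1 E -cats1.
by rewrite (@eq_path _ _ e) // => a b; rewrite se.
Qed.

Lemma uniq_rev_ends (x : T) s y : uniq (x :: s ++ [:: y]) -> uniq (y :: rev s ++ [:: x]).
Proof.
move=> H.
have -> : y :: rev s ++ [:: x] = rev (x :: s ++ [:: y]).
  by rewrite rev_cons rev_cat /= cats1.
by rewrite rev_uniq.
Qed.

Lemma uniq_join (s1 s2 : seq T) z : uniq (rcons s1 z) -> uniq (z :: s2) ->
  (forall w, w \in s1 -> w \in s2 -> False) -> uniq (s1 ++ z :: s2).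
Proof.
rewrite rcons_uniq /= => /andP[zs1 u1] /andP[zs2 u2] D.
rewrite cat_uniq u1 /= zs2 u2 !andbT; apply/norP; split; first exact: zs1.
apply/hasPn => w ws2; apply/negP => ws1; exact: D w ws1 ws2.
Qed.

Lemma path_prop (e : rel T) (Q : pred T) : symmetric e -> forall x s, path e x s ->
  (forall a b, a \in s -> b \in s -> e a b -> Q a -> Q b) ->
  forall z, z \in s -> Q z -> all Q s.
Proof.
move=> se x s; elim: s x => [|c s IH] x; first by move=> _ _ z.
move=> /= /andP[_ Ps] Hcl z zin Qz.
have Hcl' : forall a b, a \in s -> b \in s -> e a b -> Q a -> Q b.
  by move=> a b a1 b1; apply: Hcl; rewrite inE ?a1 ?b1 orbT.
case Qc: (Q c).
- rewrite /=; case: s IH Ps Hcl Hcl' {zin} => [//|d s'] IH Ps Hcl Hcl'.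
  have Qd : Q d.
    apply: (Hcl c d); rewrite ?inE ?eqxx ?orbT //.
    by move: Ps => /= /andP[].
  exact: (IH c Ps Hcl' d (mem_head _ _) Qd).
- have zs : z \in s.
    move: zin; rewrite inE => /orP[/eqP E|//]; by move: Qc; rewrite -E Qz.
  have As := IH c Ps Hcl' z zs Qz.
  case: s IH Ps Hcl Hcl' zs As {zin} => [//|d s'] IH Ps Hcl Hcl' zs As.
  have Qd : Q d by move: As => /= /andP[].
  have : Q c.
    apply: (Hcl d c); rewrite ?inE ?eqxx ?orbT //.
    by rewrite se; move: Ps => /= /andP[].
  by rewrite Qc.
Qed.

End Aux.

Lemma ar1 n1 n2 p : n1.+1 < p -> n2 <= p - 2 -> 2 <= p -> 2 * p - 1 <= n1.+2 + n2 -> False.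
Proof. lia. Qed.

Lemma ar2 n p : n.+1 < p -> n <= p - 2.
Proof. lia. Qed.

Section Dir1.
Variables (T : finType) (e : rel T) (p : nat).
Hypotheses (se : symmetric e) (ie : irreflexive e) (p2 : 2 <= p).
Variables (B : {set T}) (f : rel T) (P : T -> T -> seq T).
Hypotheses (fi : forall u, ~~ f u u) (fs : forall u v, f u v = f v u)
  (fB : forall u v, f u v -> u \in B /\ v \in B)
  (fdeg : forall u, u \in B -> 3 <= #|[set v in B | f u v]|)
  (Pp : forall u v, f u v ->
           [/\ P v u = rev (P u v), size (P u v) <= p - 2,
               uniq (u :: P u v ++ [:: v]), path e u (P u v ++ [:: v]) &
               all (fun z => z \notin B) (P u v)])
  (Pd : forall u v u' v', f u v -> f u' v' ->
           [set u; v] != [set u'; v'] -> [disjoint P u v & P u' v']).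

Definition Hin (V : {set T}) :=
  (forall x, x \in B -> x \in V) /\ (forall u v z, f u v -> z \in P u v -> z \in V).

Lemma branch_deg V u : Hin V -> u \in B -> 3 <= deg_in e V u.
Proof.
move=> [HB HP] uB.
pose g w := head w (P u w).
apply: leq_trans (fdeg uB) _.
have SUB : [set g w | w in [set v in B | f u v]] \subset [set y in V | e u y].
  apply/subsetP => y /imsetP [w wN ->]; rewrite inE in wN.
  case/andP: wN => wB fuw.
  have [_ _ _ Hpath _] := Pp fuw.
  rewrite inE /g; move: (HP u w) Hpath; case: (P u w) => [|c s] HPw /=.
  - by rewrite andbT (HB w wB).
  - by case/andP => -> _; rewrite andbT (HPw c fuw (mem_head _ _)).
rewrite /deg_in; apply: leq_trans (subset_leq_card SUB).
rewrite card_in_imset // => w1 w2; rewrite !inE => /andP[w1B fu1] /andP[w2B fu2] Eg.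
case: (eqVneq w1 w2) => // ne; exfalso.
have [_ _ _ _ N1] := Pp fu1; have [_ _ _ _ N2] := Pp fu2.
have uw1 : w1 != u by apply/eqP => E; move: (fi u); rewrite -{2}E fu1.
have D : [disjoint P u w1 & P u w2].
  apply: Pd fu1 fu2 _; apply: (set2_neq (w := w1)); rewrite !inE ?eqxx ?orbT //.
  by rewrite (negbTE uw1) (negbTE ne).
move: Eg N1 N2 D; rewrite /g; case: (P u w1) => [|c s]; case: (P u w2) => [|d t] /=.
- by move=> E; rewrite E eqxx in ne.
- by move=> E _ /andP[]; rewrite -E w1B.
- by move=> E /andP[]; rewrite E w2B.
- move=> <- _ _ /disjP D; apply: (D c); exact: mem_head.
Qed.

Lemma int_nbrs V u v z : Hin V -> f u v -> z \in P u v ->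
  exists a b, [/\ a != b, a \in V, b \in V, e z a & e z b] /\
    ((a \in B) || (a \in P u v)) /\ ((b \in B) || (b \in P u v)).
Proof.
move=> [HB HP] fuv zin.
have [_ _ U Pa _] := Pp fuv.
have [uB vB] := fB fuv.
have [s1 [s2 E]] := split_mem zin.
have HPuv : forall w, w \in P u v -> w \in V by move=> w; apply: HP.
rewrite E in U Pa HPuv *.
exists (last u s1), (head v s2).
have Ha : (last u s1 \in B) || (last u s1 \in s1 ++ z :: s2).
  have := mem_last u s1; rewrite inE => /orP[/eqP->|H]; first by rewrite uB.
  by rewrite mem_cat H orbT.
have Hb : (head v s2 \in B) || (head v s2 \in s1 ++ z :: s2).
  case: (s2) => [|c t] /=; first by rewrite vB.
  by rewrite mem_cat inE inE eqxx !orbT.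
split; last by split.
have HV : forall w, (w \in B) || (w \in s1 ++ z :: s2) -> w \in V.
  by move=> w /orP[/HB|/HPuv].
move: Pa; rewrite -catA cat_path /= => /and3P[_ eaz Pz].
split.
- have : uniq ((u :: s1) ++ (z :: s2 ++ [:: v])) by rewrite -catA in U; exact: U.
  rewrite cat_uniq => /and3P[_ H _]; apply/eqP => Eab.
  move/hasPn: H => /(_ (head v s2)).
  have -> : head v s2 \in z :: s2 ++ [:: v].
    by case: (s2) => [|c t] /=; rewrite !inE eqxx ?orbT.
  by rewrite -Eab mem_last => /(_ erefl).
- exact: HV.
- exact: HV.
- by rewrite se.
- by move: Pz; case: (s2) => [|c t] /= /andP[].
Qed.

Lemma int_deg2 V u v z : Hin V -> f u v -> z \in P u v -> 2 <= deg_in e V z.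
Proof.
move=> HV fuv zin.
have [a [b [[ab aV bV eza ezb] _]]] := int_nbrs HV fuv zin.
rewrite /deg_in; have <- : #|[set a; b]| = 2 by rewrite cards2 ab.
apply: subset_leq_card; apply/subsetP => w; rewrite !inE => /orP[]/eqP->.
- by rewrite aV eza.
- by rewrite bV ezb.
Qed.

Lemma ear_step V u v z w : Hin V -> f u v -> z \in P u v -> w \in V -> e z w ->
  deg_in e V z = 2 -> deg_in e V w = 2 -> w \in P u v.
Proof.
move=> HV fuv zin wV ezw dz dw.
have [a [b [[ab aV bV eza ezb] [Ha Hb]]]] := int_nbrs HV fuv zin.
have EN : [set a; b] == [set y in V | e z y].
  rewrite eqEcard; apply/andP; split.
  - apply/subsetP => y; rewrite !inE => /orP[]/eqP->.
    + by rewrite aV eza.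
    + by rewrite bV ezb.
  - by move: dz; rewrite /deg_in => ->; rewrite cards2 ab.
have : w \in [set y in V | e z y] by rewrite inE wV ezw.
rewrite -(eqP EN) !inE => /orP[]/eqP Ew; rewrite Ew in dw.
- case/orP: Ha => [aB|]; last by rewrite Ew.
  by have := branch_deg HV aB; rewrite dw.
- case/orP: Hb => [bB|]; last by rewrite Ew.
  by have := branch_deg HV bB; rewrite dw.
Qed.

Lemma no_rte V : reduces_to_empty e p V -> Hin V -> B != set0 -> False.
Proof.
elim => [|V0 V' R _ IH] HV Bn.
- case/set0Pn: Bn => b bB; by have := HV.1 b bB; rewrite inE.
apply: IH => //.
have keep : forall h, h \in V0 -> (h \in B \/ exists u v, f u v /\ h \in P u v) -> h \in V'.
  move=> h hV Hh; case: R HV.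
  - move=> x xV dx HV; rewrite !inE hV andbT; apply/eqP => Ehx.
    rewrite -Ehx in dx.
    case: Hh => [hB|[u [v [fuv hin]]]].
    + by have := branch_deg HV hB; move=> H; have := leq_trans H dx.
    + by have := int_deg2 HV fuv hin; move=> H; have := leq_trans H dx.
  - move=> x mid y [[xV yV midV] [U Pm D2]] Sz HV.
    rewrite !inE hV andbT; apply/negP => hm.
    have dh : deg_in e V0 h = 2 by apply/eqP; move/allP: D2; apply.
    case: Hh => [hB|[u [v [fuv hin]]]].
    + by have := branch_deg HV hB; rewrite dh.
    have Pmid : path e x mid by move: Pm; rewrite cat_path => /andP[].
    have A : all (fun w => w \in P u v) mid.
      apply: (path_prop (Q := fun w => w \in P u v) se Pmid _ hm hin).
      move=> a b am bm eab ain.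
      apply: (ear_step HV fuv ain _ eab).
      + by move/allP: midV; apply.
      + by apply/eqP; move/allP: D2; apply.
      + by apply/eqP; move/allP: D2; apply.
    have Umid : uniq mid by move: U; rewrite /= cat_uniq => /andP[_ /andP[]].
    have := uniq_leq_size Umid (fun w wm => (allP A) w wm).
    have [_ Ss _ _ _] := Pp fuv.
    move=> H; have := leq_trans H Ss; move: Sz p2; clear; set n := size mid; lia.
split.
- move=> x xB; apply: keep; [exact: HV.1 | by left].
- move=> u v z fuv zin; apply: keep; [exact: HV.2 u v z fuv zin | right; by exists u, v].
Qed.

End Dir1.
Section Dir2.
Variables (T : finType) (e : rel T) (p : nat).
Hypotheses (se : symmetric e) (ie : irreflexive e) (p2 : 2 <= p)
  (gir : girth_ge e (2 * p - 1)).
Variable V : {set T}.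
Hypotheses (Vn : V != set0) (D2 : forall x, x \in V -> 2 <= deg_in e V x)
  (NE : forall x mid y, strict_ear e V x mid y -> (size mid).+1 < p).

Definition Inv (B : {set T}) (f : rel T) (P : T -> T -> seq T) : Prop :=
 [/\ B != set0, (forall u, ~~ f u u) /\ (forall u v, f u v = f v u),
     (forall u v, f u v -> u \in B /\ v \in B),
     (forall u, u \in B -> u \in V /\ #|[set v in B | f u v]| = deg_in e V u) &
     [/\ (forall u v, f u v ->
           [/\ P v u = rev (P u v), size (P u v) <= p - 2,
               uniq (u :: P u v ++ [:: v]), path e u (P u v ++ [:: v]) &
               all (fun z => z \notin B) (P u v)]),
         (forall u v, f u v -> all (fun z => (z \in V) && (deg_in e V z == 2)) (P u v)) &
         (forall u v u' v', f u v -> f u' v' ->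
           [set u; v] != [set u'; v'] -> [disjoint P u v & P u' v'])]].

Lemma Inv_init : Inv V (fun u v => [&& u \in V, v \in V & e u v]) (fun _ _ => [::]).
Proof.
split => //.
- split => [u|u v]; first by rewrite ie !andbF.
  by rewrite se; case: (u \in V); case: (v \in V).
- by move=> u v /and3P[].
- move=> u uV; split => //; rewrite /deg_in; apply: eq_card => v.
  by rewrite !inE uV /=; case: (v \in V).
split => //.
- move=> u v /and3P[_ _ euv]; split => //=; rewrite ?euv ?andbT //.
  rewrite inE; apply/eqP => E; by move: euv; rewrite E ie.
- by move=> *; apply/disjP.
Qed.

Lemma Inv_final B f P : Inv B f P ->
  (forall z, z \in B -> #|[set v in B | f z v]| != 2) ->
  has_subdivision_mindeg3 e (p - 2).
Proof.
move=> [Bn [fi fs] fB Hdeg [Pp PV Pd]] N2.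
exists B, f, P; split => //.
move=> u uB; have [uV Eu] := Hdeg u uB.
have := D2 uV; rewrite -Eu; have := N2 u uB.
by rewrite leq_eqVlt eq_sym => /negbTE ->.
Qed.

Lemma Inv_step B f P z : Inv B f P -> z \in B -> #|[set v in B | f z v]| = 2 ->
  exists B' f' P', Inv B' f' P' /\ #|B'| < #|B|.
Proof.
move=> [Bn [fi fs] fB Hdeg [Pp PV Pd]] zB z2.
have /cards2P [a [b [ab Nz]]] : #|[set v in B | f z v]| == 2 by rewrite z2.
have : a \in [set v in B | f z v] by rewrite Nz !inE eqxx.
rewrite inE => /andP[aB fza].
have : b \in [set v in B | f z v] by rewrite Nz !inE eqxx orbT.
rewrite inE => /andP[bB fzb].
have fzw : forall w, f z w -> (w == a) || (w == b).
  move=> w fzw; have : w \in [set v in B | f z v] by rewrite inE (fB _ _ fzw).2 fzw.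
  by rewrite Nz !inE.
have az : a != z by apply/eqP => E; move: (fi z); rewrite -{2}E fza.
have bz : b != z by apply/eqP => E; move: (fi z); rewrite -{2}E fzb.
have ba : b != a by rewrite eq_sym.
have [zV dz] := Hdeg z zB; rewrite z2 in dz.
have faz : f a z by rewrite fs.
have [Raz Saz Uaz Paz Naz] := Pp a z faz.
have [Rzb Szb Uzb Pzb Nzb] := Pp z b fzb.
have Vaz := PV a z faz; have Vzb := PV z b fzb.
set s1 := P a z in Raz Saz Uaz Paz Naz Vaz *.
set s2 := P z b in Rzb Szb Uzb Pzb Nzb Vzb *.
have D12 : forall w, w \in s1 -> w \in s2 -> False.
  apply/disjP; apply: Pd faz fzb _; apply: (set2_neq (w := a)).
    by rewrite !inE eqxx.
  by rewrite !inE (negbTE az) (negbTE ab).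
have as2 : a \notin s2 by apply/negP => H; move/allP: Nzb => /(_ a H); rewrite aB.
have bs1 : b \notin s1 by apply/negP => H; move/allP: Naz => /(_ b H); rewrite bB.
have zs2 : z \notin s2 by move: Uzb => /= /andP[]; rewrite mem_cat negb_or => /andP[].
pose Q := s1 ++ z :: s2.
have uniqQ : uniq (a :: Q ++ [:: b]).
  have -> : a :: Q ++ [:: b] = (a :: s1) ++ z :: (s2 ++ [:: b]) by rewrite /Q -catA.
  apply: uniq_join.
  - rewrite -cats1; exact: Uaz.
  - exact: Uzb.
  - move=> w; rewrite inE mem_cat inE => /orP[/eqP->|ws1] /orP[ws2|/eqP E].
    + by rewrite ws2 in as2.
    + by rewrite E eqxx in ab.
    + exact: D12 w ws1 ws2.
    + by rewrite -E ws1 in bs1.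
have pathQ : path e a (Q ++ [:: b]).
  have -> : Q ++ [:: b] = (s1 ++ [:: z]) ++ (s2 ++ [:: b]) by rewrite /Q -!catA.
  rewrite cat_path Paz last_cat /=; exact: Pzb.
have allQ : all (fun w => (w \in V) && (deg_in e V w == 2)) Q.
  by rewrite /Q all_cat /= Vaz Vzb zV -dz eqxx.
have aV := (Hdeg a aB).1; have bV := (Hdeg b bB).1.
have SQ : (size Q).+1 < p.
  apply: (NE (x := a) (y := b)); split; split => //.
  - by apply/allP => w /(allP allQ) /andP[].
  - by apply/allP => w /(allP allQ) /andP[].
have nfab : ~~ f a b.
  apply/negP => fab.
  have fba : f b a by rewrite fs.
  have [_ Sba Uba Pba Nba] := Pp b a fba.
  pose c := (a :: Q ++ [:: b]) ++ P b a.
  have Sc : size c = (size Q).+2 + size (P b a) by rewrite /c size_cat /= size_cat /= addn1.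
  have Hc := gir (c := c).
  have : 2 * p - 1 <= size c.
    apply: Hc.
    - rewrite /c cat_uniq uniqQ /=.
      have -> : uniq (P b a) by move: Uba; rewrite /= cat_uniq => /andP[_ /andP[]].
      rewrite andbT; apply/hasPn => w wP.
      have wB : w \notin B by apply: (allP Nba).
      have wa : w != a by apply/eqP => E; rewrite E aB in wB.
      have wb : w != b by apply/eqP => E; rewrite E bB in wB.
      have wz : w != z by apply/eqP => E; rewrite E zB in wB.
      have ws1 : w \notin s1.
        apply/negP => ws1.
        have : [disjoint P b a & s1].
          apply: Pd fba faz _; apply: (set2_neq (w := b)); rewrite !inE ?eqxx //.
          by rewrite (negbTE ba) (negbTE bz).
        by move/disjP => /(_ w wP ws1).
      have ws2 : w \notin s2.
        apply/negP => ws2.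
        have : [disjoint P b a & s2].
          apply: Pd fba fzb _; apply: (set2_neq (w := a)); rewrite !inE ?eqxx ?orbT //.
          by rewrite (negbTE az) (negbTE ab).
        by move/disjP => /(_ w wP ws2).
      by rewrite /Q !inE !mem_cat !inE (negbTE wa) (negbTE wb) (negbTE wz)
        (negbTE ws1) (negbTE ws2).
    - by rewrite Sc !addSn !ltnS /Q size_cat /= addnS.
    - rewrite /c /= rcons_cat cat_path pathQ /= last_cat /= -cats1; exact: Pba.
  rewrite Sc; exact: ar1 SQ Sba p2.
pose f' := fun x y => [|| [&& f x y, x != z & y != z], (x == a) && (y == b) |
                          (x == b) && (y == a)].
pose P' := fun x y => if (x == a) && (y == b) then Q
                      else if (x == b) && (y == a) then rev Q else P x y.
have nfba : ~~ f b a by rewrite fs.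
have cls : forall x y, f' x y ->
   ((x == a) && (y == b)) || ((x == b) && (y == a)) \/
   [/\ f x y, x != z, y != z, P' x y = P x y & P' y x = P y x].
  move=> x y; rewrite /f' => /or3P[/and3P[fxy xz yz]|H|H];
    [right| by left; rewrite H | by left; rewrite H orbT].
  have n1 : ((x == a) && (y == b)) = false.
    by apply/negP => /andP[/eqP Ex /eqP Ey]; move: nfab; rewrite -Ex -Ey fxy.
  have n2 : ((x == b) && (y == a)) = false.
    by apply/negP => /andP[/eqP Ex /eqP Ey]; move: nfba; rewrite -Ex -Ey fxy.
  have n3 : ((y == a) && (x == b)) = false by rewrite andbC.
  have n4 : ((y == b) && (x == a)) = false by rewrite andbC.
  by split => //; rewrite /P' ?n1 ?n2 ?n3 ?n4.
have memP' : forall x y, ((x == a) && (y == b)) || ((x == b) && (y == a)) ->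
    P' x y =i Q /\ [set x; y] = [set a; b].
  move=> x y /orP[]/andP[/eqP-> /eqP->]; rewrite /P' !eqxx /=.
  - by split.
  - rewrite (negbTE ba) /=; split; [by move=> w; rewrite mem_rev | by rewrite setUC].
have notinQ : forall w, w \in Q -> w \notin B :\ z.
  move=> w; rewrite /Q mem_cat inE => /orP[ws1|/orP[/eqP->|ws2]]; rewrite !inE.
  - by rewrite (negbTE (allP Naz w ws1)) andbF.
  - by rewrite eqxx.
  - by rewrite (negbTE (allP Nzb w ws2)) andbF.
have newold : forall x y, f x y -> x != z -> y != z -> [disjoint Q & P x y].
  move=> x y fxy xz yz; apply/disjP => w.
  have zxy : z \notin [set x; y].
    by rewrite !inE negb_or; apply/andP; split; rewrite eq_sym.
  rewrite /Q mem_cat inE => /orP[ws1|/orP[/eqP->|ws2]] wP.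
  - have : [disjoint s1 & P x y].
      by apply: Pd faz fxy _; apply: (set2_neq (w := z)) => //; rewrite !inE eqxx orbT.
    by move/disjP => /(_ w ws1 wP).
  - have [_ _ _ _ N] := Pp x y fxy.
    by move: (allP N z wP); rewrite zB.
  - have : [disjoint s2 & P x y].
      by apply: Pd fzb fxy _; apply: (set2_neq (w := z)) => //; rewrite !inE eqxx.
    by move/disjP => /(_ w ws2 wP).
exists (B :\ z), f', P'; split; last first.
  by rewrite [in X in _ < X](cardsD1 z B) zB.
split.
- by apply/set0Pn; exists a; rewrite !inE az aB.
- split.
  + move=> u; rewrite /f' (negbTE (fi u)) /=.
    apply/negP => /orP[]/andP[/eqP E1 /eqP E2]; by rewrite -E1 -E2 eqxx in ab.
  + move=> u v; rewrite /f' fs.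
    by case: (u == a); case: (u == b); case: (v == a); case: (v == b);
       case: (u != z); case: (v != z); case: (f v u).
- move=> u v /cls [/orP[]/andP[/eqP-> /eqP->]|[fuv uz vz _ _]];
    rewrite !inE ?az ?bz ?aB ?bB //.
  by have [uB vB] := fB _ _ fuv; rewrite uz vz uB vB.
- move=> u; rewrite !inE => /andP[uz uB]; have [uV du] := Hdeg u uB; split => //.
  case: (eqVneq u a) => [Eu|ua]; [|case: (eqVneq u b) => [Eu|ub]].
  + rewrite Eu in du *.
    have -> : [set v in B :\ z | f' a v] = b |: ([set v in B | f a v] :\ z).
      apply/setP => v; rewrite /f' !inE eqxx (negbTE ab) az /= ?andbT ?orbF.
      case: (eqVneq v b) => [->|vb];
        rewrite ?eqxx ?bz ?bB ?(negbTE nfab) ?(negbTE vb) /=;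
        by [|case: (v != z); case: (v \in B); case: (f a v)].
    have bN : (b \in [set v in B | f a v] :\ z) = false
      by rewrite !inE (negbTE nfab) !andbF.
    have zN : z \in [set v in B | f a v] by rewrite inE zB faz.
    by rewrite cardsU1 bN -du (cardsD1 z [set v in B | f a v]) zN.
  + rewrite Eu in du *.
    have -> : [set v in B :\ z | f' b v] = a |: ([set v in B | f b v] :\ z).
      apply/setP => v; rewrite /f' !inE eqxx (negbTE ba) bz /= ?andbT.
      case: (eqVneq v a) => [->|va];
        rewrite ?eqxx ?az ?aB ?(negbTE nfba) ?(negbTE va) /= ?orbF ?orbT;
        by [|case: (v != z); case: (v \in B); case: (f b v)].
    have bN : (a \in [set v in B | f b v] :\ z) = false
      by rewrite !inE (negbTE nfba) !andbF.
    have zN : z \in [set v in B | f b v] by rewrite inE zB fs fzb.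
    by rewrite cardsU1 bN -du (cardsD1 z [set v in B | f b v]) zN.
  + have nfuz : ~~ f u z.
      apply/negP => fuz; rewrite fs in fuz; have := fzw u fuz.
      by rewrite (negbTE ua) (negbTE ub).
    have -> : [set v in B :\ z | f' u v] = [set v in B | f u v].
      apply/setP => v; rewrite /f' !inE (negbTE ua) (negbTE ub) uz /= ?andbF ?orbF.
      case: (eqVneq v z) => [->|vz] /=; first by rewrite (negbTE nfuz) andbF.
      by rewrite andbT.
    exact: du.
- split.
  + move=> u v /cls [H|[fuv uz vz E1 E2]].
    * have [M _] := memP' u v H.
      case/orP: H => /andP[/eqP Eu /eqP Ev]; rewrite Eu Ev /P' !eqxx /= ?(negbTE ba) /=.
      - split => //; first exact: ar2 SQ.
        by apply/allP.
      - split.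
        ++ by rewrite revK.
        ++ by rewrite size_rev; exact: ar2 SQ.
        ++ exact: uniq_rev_ends.
        ++ exact: path_rev.
        ++ by rewrite all_rev; apply/allP.
    * rewrite E1 E2; have [R S U Pa N] := Pp u v fuv; split => //.
      apply/allP => w wP; rewrite !inE (negbTE (allP N w wP)) andbF.
      done.
  + move=> u v /cls [H|[fuv uz vz E1 E2]].
    * case/orP: H => /andP[/eqP Eu /eqP Ev]; rewrite Eu Ev /P' !eqxx /= ?(negbTE ba) /=.
      - exact: allQ.
      - by rewrite all_rev.
    * rewrite E1; exact: PV.
  + move=> u v u' v' /cls H1 /cls H2 Hne.
    case: H1 => [H1|[fuv uz vz E1 _]]; case: H2 => [H2|[fuv' uz' vz' E1' _]].
    * have [_ S1] := memP' u v H1; have [_ S2] := memP' u' v' H2.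
      by rewrite S1 S2 eqxx in Hne.
    * have [M _] := memP' u v H1.
      apply/disjP => w w1 w2; rewrite M E1' in w1 w2.
      by move/disjP: (newold u' v' fuv' uz' vz') => /(_ w w1 w2).
    * have [M _] := memP' u' v' H2.
      apply/disjP => w w1 w2; rewrite M E1 in w1 w2.
      by move/disjP: (newold u v fuv uz vz) => /(_ w w2 w1).
    * rewrite E1 E1'; exact: Pd.
Qed.

Lemma sub_ex n : forall (B : {set T}) (f : rel T) (P : T -> T -> seq T), #|B| <= n -> Inv B f P -> has_subdivision_mindeg3 e (p - 2).
Proof.
elim: n => [|n IH] B f P HB I.
- have [Bn _ _ _ _] := I; move: HB; rewrite leqn0 cards_eq0 => /eqP E.
  by rewrite E eqxx in Bn.
- case: (classic (exists z, z \in B /\ #|[set v in B | f z v]| = 2)) => [[z [zB z2]]|N].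
  + have [B' [f' [P' [I' lt]]]] := Inv_step I zB z2.
    apply: (IH B' f' P') => //; rewrite -ltnS; exact: leq_trans lt HB.
  + apply: (Inv_final I) => z zB; apply/eqP => z2; apply: N; by exists z.
Qed.

Lemma dir2 : has_subdivision_mindeg3 e (p - 2).
Proof. exact: (sub_ex (leqnn _) Inv_init). Qed.
End Dir2.

Section Final.
Variables (T : finType) (e : rel T) (p : nat).
Hypothesis p2 : 2 <= p.

Lemma card_red (V V' : {set T}) : p_reduction e p V V' -> #|V'| < #|V|.
Proof.
case => [x xV _ | x mid y [[_ _ midV] _] Sz].
- by rewrite [in X in _ < X](cardsD1 x V) xV.
- case: mid midV Sz => [|m mid'] midV Sz; first by have := leq_trans p2 Sz.
  apply: proper_card; rewrite properE subsetDl /=; apply/subsetPn; exists m.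
  + by move: midV => /= /andP[].
  + by rewrite !inE eqxx.
Qed.

Lemma irr_or_rte n (V : {set T}) : #|V| <= n -> reduces_to_empty e p V \/
  exists V0 : {set T}, V0 != set0 /\ forall V', ~ p_reduction e p V0 V'.
Proof.
elim: n V => [|n IH] V HV.
- left; move: HV; rewrite leqn0 cards_eq0 => /eqP->; exact: rte_nil.
- case: (eqVneq V set0) => [->|Vn]; first by left; exact: rte_nil.
  case: (classic (exists V', p_reduction e p V V')) => [[V' R]|NR].
  + have lt := card_red R.
    have [|H|H] := IH V'; first by rewrite -ltnS; exact: leq_trans lt HV.
    * left; exact: rte_step R H.
    * by right.
  + right; exists V; split => // V' R; apply: NR; by exists V'.
Qed.

End Final.

Theorem mainTheorem5 (T : finType) (e : rel T) (p : nat) :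
  simple_graph e -> 2 <= p -> girth_ge e (2 * p - 1) ->
  (path_degenerate e p <-> ~ has_subdivision_mindeg3 e (p - 2)).
Proof.
move=> [ie se] p2 gir; split.
- move=> deg [B [f [P [Bn [fi fs] fB fdeg [Pp Pd]]]]].
  apply: (no_rte se p2 fi fB fdeg Pp Pd deg _ Bn).
  by split => *; rewrite inE.
- move=> nsub; apply: NNPP => ndeg.
  have [H|[V [Vn Virr]]] := @irr_or_rte T e p p2 _ [set: T] (leqnn _); first exact: ndeg H.
  apply: nsub; apply: (dir2 se ie p2 gir Vn).
  + move=> x xV; rewrite leqNgt; apply/negP => dx.
    by apply: (Virr (V :\ x)); apply: red_low_deg.
  + move=> x mid y E; rewrite ltnNge; apply/negP => Sz.
    by apply: (Virr (V :\: [set z | z \in mid])); apply: red_ear E Sz.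
Qed.
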